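(* Let $T$ be the $H_3(\mathbb R)$-odometer associated with a nested sequence $\Gamma_1\supset\Gamma_2\supset\cdots$ of lattices in $H_3(\mathbb R)$. Then $T$ is free if and only if $\{c(t):t\in\mathbb R\}\cap\bigcap_{n=1}^\infty\Gamma_n=\{1\}$.
   Context: $H_3(\mathbb R)$: real $3\times3$ upper triangular unipotent matrices; $c(t)$ is the matrix with $(1,3)$ entry $t$ and other off-diagonal entries $0$, so $\{c(t)\}$ is the center. A lattice is a discrete subgroup of finite covolume. The $H_3(\mathbb R)$-odometer associated with the sequence is the left-translation action on $X=\varprojlim H_3(\mathbb R)/\Gamma_j$ with the invariant probability $\mu$ which is the inverse limit of the invariant probabilities on $H_3(\mathbb R)/\Gamma_j$. The action is free if for $\mu$-a.e. $x$ the stability group $\{g:T_gx=x\}$ is trivial. *)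

(* Defs.v *)
From HB Require Import structures.
From mathcomp Require Import all_boot all_order all_algebra.
From mathcomp Require Import all_classical all_reals all_analysis.
Set Implicit Arguments. Unset Strict Implicit. Unset Printing Implicit Defensive.
Import Order.TTheory GRing.Theory Num.Theory.
Local Open Scope classical_set_scope.
Local Open Scope ring_scope.

(* The Heisenberg group H_3(R), in matrix-entry coordinates:
   ((a, b), c) stands for the matrix [[1, a, c], [0, 1, b], [0, 0, 1]].
   The group law below is exactly matrix multiplication in these coordinates. *)
Definition H3 (R : realType) := ((R * R) * R)%type.

Definition h3mul {R : realType} (x y : H3 R) : H3 R :=
  ((x.1.1 + y.1.1, x.1.2 + y.1.2), x.2 + y.2 + x.1.1 * y.1.2).

Definition h3one {R : realType} : H3 R := ((0, 0), 0).

Definition h3inv {R : realType} (x : H3 R) : H3 R :=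
  ((- x.1.1, - x.1.2), - x.2 + x.1.1 * x.1.2).

Definition hc {R : realType} (t : R) : H3 R := ((0, 0), t).

(* Haar measure of H_3(R): Lebesgue measure in the coordinates (a, b, c)
   (the group law has Jacobian 1 on both sides). *)
Definition haar3 {R : realType} :=
  product_measure1 (product_measure1 (@lebesgue_measure R) (@lebesgue_measure R)) (@lebesgue_measure R).

Definition is_subgroup {R : realType} (G : set (H3 R)) : Prop :=
  G h3one /\ (forall x y, G x -> G y -> G (h3mul x y)) /\
  (forall x, G x -> G (h3inv x)).

Definition is_discrete {R : realType} (G : set (H3 R)) : Prop :=
  forall g, G g -> exists2 e : R, 0 < e & forall h, G h ->
    `|h.1.1 - g.1.1| < e -> `|h.1.2 - g.1.2| < e -> `|h.2 - g.2| < e -> h = g.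

Definition fundamental_domain {R : realType} (G : set (H3 R)) (F : set (H3 R)) :=
  measurable F /\ forall g : H3 R, exists! gam, G gam /\ F (h3mul g gam).

Definition finite_covolume {R : realType} (G : set (H3 R)) : Prop :=
  exists F, fundamental_domain G F /\ (haar3 F < +oo)%E.

Definition lattice {R : realType} (G : set (H3 R)) : Prop :=
  [/\ is_subgroup G, is_discrete G & finite_covolume G].

Definition coset {R : realType} (g : H3 R) (G : set (H3 R)) : set (H3 R) :=
  h3mul g @` G.

(* points of the inverse limit  X = lim H_3(R)/Gam_j : compatible sequences
   of cosets x_j in H/Gam_j, with x_{j+1} mapped to x_j. *)
Definition odo_point {R : realType} (Gam : nat -> set (H3 R))
    (x : nat -> set (H3 R)) : Prop :=
  (forall j, exists g, x j = coset g (Gam j)) /\ (forall j, x j.+1 `<=` x j).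

Definition odo_set {R : realType} (Gam : nat -> set (H3 R)) :
  set (nat -> set (H3 R)) := [set x | odo_point Gam x].

Definition cyl {R : realType} (Gam : nat -> set (H3 R)) (j : nat)
    (A : set (H3 R)) : set (nat -> set (H3 R)) :=
  [set x | odo_point Gam x /\ exists g, A g /\ x j = coset g (Gam j)].

Definition cylinders {R : realType} (Gam : nat -> set (H3 R)) :
  set (set (nat -> set (H3 R))) :=
  [set C | exists j A, measurable A /\ C = cyl Gam j A].

(* the measurable space carrying X (Borel sigma-algebra of the inverse limit,
   generated by the cylinders); X itself is the measurable set odo_set Gam *)
Definition odo_space {R : realType} (Gam : nat -> set (H3 R)) :=
  g_sigma_algebraType (cylinders Gam).

Definition odo_act {R : realType} (g : H3 R) (x : nat -> set (H3 R)) :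
  nat -> set (H3 R) := fun j => h3mul g @` x j.

Definition odo_free {R : realType} (Gam : nat -> set (H3 R))
    (mu : probability (odo_space Gam) R) : Prop :=
  {ae mu, forall x : odo_space Gam, odo_set Gam x ->
     forall g : H3 R, odo_act g x = x -> g = h3one}.

(* Main.v *)
Require Import Defs.
From HB Require Import structures.
From mathcomp Require Import all_boot all_order all_algebra.
From mathcomp Require Import all_classical all_reals all_analysis.
From mathcomp Require Import ring lra measurable_realfun.
Import Order.TTheory GRing.Theory Num.Theory.
Local Open Scope classical_set_scope.
Local Open Scope ring_scope.




Lemma L1 (R : realType) (G : set (H3 R)) (g h : H3 R) : is_subgroup G ->
  h3mul g @` coset h G = coset h G ->
  G ((g.1.1, g.1.2), g.2 + g.1.1 * h.1.2 - g.1.2 * h.1.1).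
Proof.
move=> [G1 [GM GV]] E.
have : coset h G (h3mul g (h3mul h h3one)) by rewrite -E; exists (h3mul h h3one) => //; exists h3one.
case=> gam Ggam; move: E; case: h g gam Ggam => [[a b] c] [[v1 v2] s] [[x y] z] /= Gg _.
rewrite /h3mul /= => [[e1 e2 e3]].
clear GM GV G1.
have ex : v1 = x by lra.
have ey : v2 = y by lra.
subst v1 v2.
have -> : s + x * b - y * a = z by rewrite (mulrC y a); lra.
by [].
Qed.

Lemma Lconj {R : realType} {G : set (H3 R)} {gam : H3 R} {v1 v2 u} : is_subgroup G ->
  G gam -> G ((v1, v2), u) -> G ((v1, v2), u + v1 * gam.1.2 - v2 * gam.1.1).
Proof.
move=> [G1 [GM GV]] Gg Gy.
have := GM _ _ (GM _ _ (GV _ Gg) Gy) Gg.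
case: gam Gg => [[x y] z] /= _.
rewrite /h3mul /h3inv /=.
congr G; congr (_,_,_); ring.
Qed.

Lemma Ldiff {R : realType} {G : set (H3 R)} {v1 v2 a b} : is_subgroup G ->
  G ((v1, v2), a) -> G ((v1, v2), b) -> G (hc (b - a)).
Proof.
move=> [G1 [GM GV]] Ga Gb.
have := GM _ _ (GV _ Ga) Gb.
rewrite /h3mul /h3inv /hc /=.
congr G; congr (_,_,_); ring.
Qed.

Lemma Lcent (R : realType) (G : set (H3 R)) (h : H3 R) t : is_subgroup G ->
  G (hc t) -> h3mul (hc t) @` coset h G = coset h G.
Proof.
move=> [G1 [GM GV]] Gt; apply/seteqP; split => y.
- case=> _ [gam Gg <-] <-; exists (h3mul (hc t) gam); first exact: GM.
  by rewrite /h3mul /hc /=; congr (_,_,_); ring.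
- case=> gam Gg <-; exists (h3mul h (h3mul (h3inv (hc t)) gam)).
    by exists (h3mul (h3inv (hc t)) gam) => //; apply: GM => //; apply: GV.
  by rewrite /h3mul /h3inv /hc /=; congr (_,_,_); ring.
Qed.
Lemma cyl_meas (R : realType) (Gam : nat -> set (H3 R)) j (A : set (H3 R)) :
  measurable A -> measurable (cyl Gam j A : set (odo_space Gam)).
Proof. by move=> mA; apply: sub_sigma_algebra; exists j, A. Qed.

Lemma odo_set_cyl (R : realType) (Gam : nat -> set (H3 R)) :
  odo_set Gam = cyl Gam 0 setT.
Proof.
apply/seteqP; split => x.
- by move=> hx; split => //; case: (hx) => /(_ 0%N) [g ->] _; exists g.
- by case.
Qed.

Lemma forward (R : realType) (Gam : nat -> set (H3 R))
  (hlat : forall n, lattice (Gam n))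
  (mu : probability (odo_space Gam) R)
  (hX : mu (odo_set Gam) = 1%E) :
  odo_free mu ->
  [set hc t | t in [set: R]] `&` \bigcap_n Gam n = [set h3one].
Proof.
move=> hfree; apply/seteqP; split; last first.
  move=> y ->; split; first by exists 0.
  by move=> n _; case: (hlat n) => [[]].
move=> y [[t _ <-] Hall].
case: hfree => N [mN N0 sub].
have [t0|tn0] := eqVneq t 0; first by rewrite t0.
exfalso.
have sN : odo_set Gam `<=` N.
  move=> x hx; apply: sub => /= /(_ hx (hc t)) H.
  have : hc t = h3one.
    apply: H; apply: funext => j; rewrite /odo_act; case: hx => /(_ j) [h ->] _.
    by apply: Lcent; [case: (hlat j) => [[]]|apply: Hall].
  by case => /eqP; rewrite (negbTE tn0).
have H : (mu (odo_set Gam) <= mu N)%E.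
  apply: le_measure; rewrite ?inE //.
  by rewrite odo_set_cyl; apply: cyl_meas.
by move: H; rewrite hX N0 lee_fin ler10.
Qed.


Lemma approx (R : realType) (x p : R) : 0 < p -> exists q : rat, `|x - ratr q| < p.
Proof.
move=> p0; have : x - p < x + p by lra.
case/rat_in_itvoo => q; rewrite in_itv /= => /andP [h1 h2]; exists q.
rewrite ltr_distl; apply/andP; split; lra.
Qed.

Lemma exists_code (R : realType) (G : set (H3 R)) : is_discrete G ->
  exists code : H3 R -> nat, forall g g', G g -> G g' -> code g = code g' -> g = g'.
Proof.
move=> disc.
pose P (g : H3 R) (t : rat * rat * rat * rat) := G g ->
  [/\ `|g.1.1 - ratr t.1.1.1| < ratr t.2, `|g.1.2 - ratr t.1.1.2| < ratr t.2,
      `|g.2 - ratr t.1.2| < ratr t.2 &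
      forall h, G h -> `|h.1.1 - g.1.1| < (ratr t.2) *+ 2 ->
        `|h.1.2 - g.1.2| < (ratr t.2) *+ 2 -> `|h.2 - g.2| < (ratr t.2) *+ 2 -> h = g].
have ex : forall g, exists t, P g t.
  move=> g; have [Gg|nGg] := pselect (G g); last first.
    by exists (0, 0, 0, 0); move=> /nGg.
  have [e e0 He] := disc g Gg.
  have : 0 < e / 2 by lra.
  case/rat_in_itvoo => p; rewrite in_itv /= => /andP [p0 pe].
  have [q1 h1] := @approx R g.1.1 _ p0.
  have [q2 h2] := @approx R g.1.2 _ p0.
  have [q3 h3] := @approx R g.2 _ p0.
  exists (q1, q2, q3, p) => _ /=; split => // h Gh a1 a2 a3.
  apply: He => //; apply: (lt_trans _ (_ : ratr p *+ 2 < e)) => //; lra.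
have [f Hf] := choice ex.
exists (fun g => pickle (f g)) => g g' Gg Gg' /(pcan_inj pickleK) E.
have [a1 a2 a3 Hg] := Hf g Gg.
have [b1 b2 b3 _] := Hf g' Gg'.
rewrite E in a1 a2 a3 Hg.
apply/esym/Hg => //.
- have := ler_distD (ratr (f g').1.1.1) g'.1.1 g.1.1.
  rewrite (distrC g.1.1) in a1; rewrite mulr2n; lra.
- have := ler_distD (ratr (f g').1.1.2) g'.1.2 g.1.2.
  rewrite (distrC g.1.2) in a2; rewrite mulr2n; lra.
- have := ler_distD (ratr (f g').1.2) g'.2 g.2.
  rewrite (distrC g.2) in a3; rewrite mulr2n; lra.
Qed.
Lemma nest_mono {R : realType} {Gam : nat -> set (H3 R)} :
  (forall n, Gam n.+1 `<=` Gam n) -> forall m n, (m <= n)%N -> Gam n `<=` Gam m.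
Proof.
move=> hn m; elim => [|n IH]; first by rewrite leqn0 => /eqP ->.
rewrite leq_eqVlt => /orP [/eqP -> //| /IH H].
by move=> x /hn /H.
Qed.

Lemma sep (R : realType) (Gam : nat -> set (H3 R))
  (hsub : forall n, is_subgroup (Gam n))
  (hnest : forall n, Gam n.+1 `<=` Gam n) (hdisc : is_discrete (Gam 0%N))
  (hZ : forall t, (forall n, Gam n (hc t)) -> t = 0) :
  forall L : R, exists k, forall d, Gam k (hc d) -> `|d| <= L -> d = 0.
Proof.
have G01 : Gam 0%N h3one by case: (hsub 0%N).
have [e e0 He] := hdisc _ G01.
have claim : forall n : nat, forall a : R, exists k, forall d, Gam k (hc d) ->
    a <= d -> d < a + n%:R * (e / 2) -> d = 0.
  elim => [|n IH] a.
    by exists 0%N => d _ h1 h2; exfalso; move: h1 h2; rewrite mul0r addr0; lra.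
  have [[k1 Hk1]|nk] := pselect (exists k, forall d, Gam k (hc d) ->
      a <= d -> d < a + e / 2 -> d = 0); last first.
    exfalso.
    have nk' : forall k, exists d, [/\ Gam k (hc d), a <= d, d < a + e / 2 & d != 0].
      move=> k; apply: contrapT => nex; apply: nk; exists k => d Gd h1 h2.
      apply: contrapT => dn0; apply: nex; exists d; split => //; exact/eqP.
    have [d0 [G0 a0 b0 n0]] := nk' 0%N.
    have : d0 = 0; last by move/eqP: n0.
    apply: hZ => k.
    have [dk [Gk ak bk nk0]] := nk' k.
    have Gk0 : Gam 0%N (hc dk) by exact: (nest_mono hnest _ _ (leq0n k) _ Gk).
    have := He _ (Ldiff (hsub 0%N) G0 Gk0).
    rewrite /hc /h3one /= !subrr normr0 => /(_ e0 e0).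
    rewrite subr0.
    have H : `|dk - d0| < e by rewrite ltr_distl; apply/andP; split; lra.
    by move=> /(_ H) [] /eqP; rewrite subr_eq0 => /eqP <-.
  have [k2 Hk2] := IH (a + e / 2).
  exists (maxn k1 k2) => d Gd h1 h2.
  have [dlt|dge] := ltP d (a + e / 2).
    by apply: Hk1 => //; apply: (nest_mono hnest _ _ (leq_maxl k1 k2)).
  apply: Hk2 => //; first by apply: (nest_mono hnest _ _ (leq_maxr k1 k2)).
  by move: h2; rewrite -natr1 mulrDl mul1r; lra.
move=> L.
have : 0 <= (2 * `|L| + 1) / (e / 2) by apply: divr_ge0; [have := normr_ge0 L; lra | lra].
move=> /archi_boundP; set n := Num.bound _ => hn.
have [k Hk] := claim n (- `|L| - 1).
exists k => d Gd dL; apply: Hk => //.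
  have := ler_norm (- d); rewrite normrN; have := ler_norm d; have := ler_norm L; lra.
have : (2 * `|L| + 1) < n%:R * (e / 2).
  by move: hn; rewrite ltr_pdivrMr //; lra.
have := ler_norm d; have := ler_norm L; lra.
Qed.
Definition phi {R : realType} (v1 v2 : R) (h : H3 R) := v1 * h.1.2 - v2 * h.1.1.
Definition Av {R : realType} (G : set (H3 R)) (v1 v2 M r : R) : set (H3 R) :=
  [set h | exists s, `|s| <= M /\ G ((v1, v2), s + phi v1 v2 h - r)].

Lemma phi_meas (R : realType) (v1 v2 r : R) :
  measurable_fun setT (fun h : H3 R => phi v1 v2 h - r).
Proof.
apply: measurable_funB; last exact: measurable_cst.
apply: measurable_funB; apply: measurable_funM; try exact: measurable_cst.
- exact: measurableT_comp measurable_snd measurable_fst.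
- exact: measurableT_comp measurable_fst measurable_fst.
Qed.

Lemma Av_meas (R : realType) (G0 G : set (H3 R)) (code : H3 R -> nat)
  (hcode : forall g g', G0 g -> G0 g' -> code g = code g' -> g = g')
  (hG : G `<=` G0) (v1 v2 M r : R) : measurable (Av G v1 v2 M r).
Proof.
pose E n := [set u : R | exists gam, [/\ G0 gam, code gam = n, G gam,
   gam.1 = (v1, v2) & `|gam.2 - u| <= M]].
have -> : Av G v1 v2 M r = (fun h : H3 R => phi v1 v2 h - r) @^-1` \bigcup_n E n.
  apply/seteqP; split => h /=.
  - case=> s [sM Gs]; exists (code ((v1, v2), s + phi v1 v2 h - r)) => //.
    exists ((v1, v2), s + phi v1 v2 h - r); split => //; first exact: hG.
    by rewrite /= (_ : s + phi v1 v2 h - r - (phi v1 v2 h - r) = s) //; ring.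
  - case=> n _ [gam [G0g cg Gg g1 g2]]; exists (gam.2 - (phi v1 v2 h - r)); split => //.
    rewrite (_ : gam.2 - (phi v1 v2 h - r) + phi v1 v2 h - r = gam.2); last by ring.
    by rewrite -g1; case: (gam) Gg.
have mE : measurable (\bigcup_n E n).
  apply: bigcupT_measurable => n.
  have [[g0 [G0g cg Gg g1]]|ne] := pselect (exists g0, [/\ G0 g0, code g0 = n, G g0 & g0.1 = (v1, v2)]); last first.
    rewrite (_ : E n = set0); first exact: measurable0.
    apply/seteqP; split => // u [gam [? ? ? ? _]]; apply: ne; exists gam; split => //.
  rewrite (_ : E n = [set` `[g0.2 - M, g0.2 + M]]); first exact: measurable_itv.
  apply/seteqP; split => u /=.
  - case=> gam [G0g' cg' Gg' g1' h]; have eg := hcode _ _ G0g G0g' (etrans cg (esym cg')).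
    by rewrite in_itv /= -ler_distlC eg.
  - rewrite in_itv /= -ler_distlC => h; exists g0; split => //.
have := @phi_meas R v1 v2 r measurableT _ mE.
by rewrite setTI.
Qed.


Lemma small_meas (d : measure_display) (T : measurableType d) (R : realType)
  (mu : probability T R) (B : set T) (mB : measurable B) :
  (forall N : nat, exists F : nat -> set T, [/\ (forall i, measurable (F i)),
     (forall i j, (i < N)%N -> (j < N)%N -> i != j -> F i `&` F j = set0),
     (forall i, mu (F i) = mu (F 0%N)) & B `<=` F 0%N]) -> mu B = 0%E.
Proof.
move=> HN.
have Hb : forall N : nat, (\sum_(i < N) mu B <= 1)%E.
  move=> N; have [F [mF dF eF BF]] := HN N.
  pose F' (i : 'I_N) := F (val i).
  have := @measure_bigsetU_ord _ _ _ mu N xpredT F' (fun i => mF _).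
  have tF : trivIset setT F'.
    move=> i j _ _ [x [xi xj]]; apply/val_inj/eqP; apply: contraT => nij.
    by have := dF _ _ (ltn_ord i) (ltn_ord j) nij; move/seteqP => [/(_ x (conj xi xj))].
  move=> /(_ tF) eq.
  have le1 : (mu (\big[setU/set0]_(i < N | xpredT i) F' i) <= 1)%E.
    by apply: probability_le1; apply: bigsetU_measurable => i _; exact: mF.
  rewrite eq in le1.
  apply: le_trans le1.
  apply: lee_sum => i _; rewrite /F'.
  have h : (mu B <= mu (F 0%N))%E by apply: le_measure; rewrite ?inE.
  by rewrite -(eF i) in h; exact: h.
have B0 : (0 <= mu B)%E by [].
have B1 : (mu B <= 1)%E by have := Hb 1%N; rewrite big_ord1.
have fB : mu B \is a fin_num by rewrite ge0_fin_numE // (le_lt_trans B1) // ltry.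
rewrite -(fineK fB) in Hb B0 *; congr (_%:E).
set b := fine (mu B) in Hb B0 *.
rewrite lee_fin in B0.
apply/eqP; rewrite eq_le B0 andbT; apply/negP => /negP; rewrite -ltNge => bpos.
have : 0 <= b^-1 by rewrite invr_ge0.
move=> /archi_boundP; set N := Num.bound _ => hN.
have := Hb N; rewrite sumEFin sumr_const card_ord lee_fin => hb.
have : b * N%:R <= 1 by rewrite mulr_natr.
rewrite -ler_pdivlMl //.
by rewrite mulr1; lra.
Qed.


Lemma phiM (R : realType) (v1 v2 : R) (a b : H3 R) :
  phi v1 v2 (h3mul a b) = phi v1 v2 a + phi v1 v2 b.
Proof. by rewrite /phi /h3mul /=; ring. Qed.

Lemma Av_trans (R : realType) (G : set (H3 R)) (v1 v2 M r : R) (w : H3 R) :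
  phi v1 v2 w = r -> h3mul w @` Av G v1 v2 M 0 = Av G v1 v2 M r.
Proof.
move=> pw; apply/seteqP; split.
- move=> _ [h [s [sM Gs]] <-]; exists s; split => //.
  rewrite phiM -pw (_ : s + (phi v1 v2 w + phi v1 v2 h) - phi v1 v2 w = s + phi v1 v2 h - 0) //.
  by ring.
- move=> h [s [sM Gs]]; exists (h3mul (h3inv w) h).
    exists s; split => //.
    rewrite (_ : s + phi v1 v2 (h3mul (h3inv w) h) - 0 = s + phi v1 v2 h - r) //.
    by rewrite phiM -pw /phi /h3inv /=; ring.
  by case: w {pw} => [[a b] c]; case: h {Gs} => [[x y] z]; rewrite /h3mul /h3inv /=; congr (_,_,_); ring.
Qed.

Lemma exists_w (R : realType) (v1 v2 r : R) : (v1, v2) != (0, 0) ->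
  exists w : H3 R, phi v1 v2 w = r.
Proof.
move=> nv; have [v10|v1n0] := eqVneq v1 0.
  have v2n0 : v2 != 0 by apply: contraNneq nv => ->; rewrite v10.
  by exists ((- r / v2, 0), 0); rewrite /phi /=; field.
by exists ((0, r / v1), 0); rewrite /phi /=; field.
Qed.

Lemma Av_disj (R : realType) (Gam : nat -> set (H3 R)) k (v1 v2 M r r' L : R) :
  is_subgroup (Gam k) -> (forall d, Gam k (hc d) -> `|d| <= L -> d = 0) ->
  2 * M < `|r - r'| -> `|r - r'| + 2 * M <= L ->
  cyl Gam k (Av (Gam k) v1 v2 M r) `&` cyl Gam k (Av (Gam k) v1 v2 M r') = set0.
Proof.
move=> sg hsep h1 h2; apply/seteqP; split => // x [[_ [g [Ag e1]]] [_ [g' [Ag' e2]]]].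
have : coset g (Gam k) g'.
  rewrite -e1 e2; exists h3one; first by case: sg.
  by case: (g') => [[? ?] ?]; rewrite /h3mul /=; congr (_,_,_); ring.
case=> gam Gg eg.
case: Ag => s [sM Gs]; case: Ag' => s' [sM' Gs'].
have := Lconj sg Gg Gs.
move=> /(Ldiff sg) /(_ Gs').
rewrite -eg phiM.
set d := (_ - _).
have -> : d = s' - s + r - r' by rewrite /d /phi; ring.
move=> /hsep H.
have hs : `|s' - s| <= 2 * M by have := ler_normD s' (- s); rewrite normrN; lra.
have hD : `|s' - s + r - r'| <= L.
  by have := ler_normD (s' - s) (r - r'); rewrite !addrA; lra.
have e : r - r' = - (s' - s) by have := H hD; lra.
by move: h1; rewrite e normrN; lra.
Qed.


Lemma nat_gap (R : realType) (i j N : nat) : (i < N)%N -> (j < N)%N -> i != j ->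
  1 <= `|i%:R - j%:R : R| /\ `|i%:R - j%:R : R| <= N%:R - 1.
Proof.
move=> iN jN nij.
have hi : i%:R + 1 <= N%:R :> R by rewrite natr1 ler_nat.
have hj : j%:R + 1 <= N%:R :> R by rewrite natr1 ler_nat.
have i0 : 0 <= i%:R :> R by [].
have j0 : 0 <= j%:R :> R by [].
case: (ltngtP i j) => [ij|ji|e]; last by rewrite e eqxx in nij.
- have : i%:R + 1 <= j%:R :> R by rewrite natr1 ler_nat.
  move=> h; rewrite ler0_norm; [split; lra | lra].
- have : j%:R + 1 <= i%:R :> R by rewrite natr1 ler_nat.
  move=> h; rewrite ger0_norm; [split; lra | lra].
Qed.

Lemma Bnull (R : realType) (Gam : nat -> set (H3 R))
  (hsub : forall n, is_subgroup (Gam n))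
  (hsepall : forall L : R, exists k, forall d, Gam k (hc d) -> `|d| <= L -> d = 0)
  (mu : probability (odo_space Gam) R)
  (hinv : forall (j : nat) (g : H3 R) (A : set (H3 R)), measurable A ->
     mu (cyl Gam j (h3mul g @` A)) = mu (cyl Gam j A))
  (v1 v2 M : R) (hAm : forall k r, measurable (Av (Gam k) v1 v2 M r))
  (nv : (v1, v2) != (0, 0)) (M0 : 0 <= M) :
  mu (\bigcap_k cyl Gam k (Av (Gam k) v1 v2 M 0)) = 0%E.
Proof.
apply: small_meas.
  by apply: bigcapT_measurable => k; apply: cyl_meas.
move=> N; have [k Hk] := hsepall (N%:R * (2 * M + 1)).
exists (fun i => cyl Gam k (Av (Gam k) v1 v2 M (i%:R * (2 * M + 1)))); split.
- by move=> i; apply: cyl_meas.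
- move=> i j iN jN nij; apply: Av_disj (hsub k) Hk _ _.
  + rewrite -mulrBl normrM (ger0_norm (_ : 0 <= 2 * M + 1)); last by lra.
    have [g1 g2] := @nat_gap R _ _ _ iN jN nij; nra.
  + rewrite -mulrBl normrM (ger0_norm (_ : 0 <= 2 * M + 1)); last by lra.
    have [g1 g2] := @nat_gap R _ _ _ iN jN nij; nra.
- move=> i; rewrite mul0r.
  have [w pw] := @exists_w R _ _ (i%:R * (2 * M + 1)) nv.
  by rewrite -(@Av_trans R (Gam k) v1 v2 M _ w pw) hinv //.
- by move=> x /(_ k I); rewrite mul0r.
Qed.


Lemma backward (R : realType) (Gam : nat -> set (H3 R))
  (hlat : forall n, lattice (Gam n))
  (hnest : forall n, Gam n.+1 `<=` Gam n)
  (mu : probability (odo_space Gam) R)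
  (hinv : forall (j : nat) (g : H3 R) (A : set (H3 R)), measurable A ->
     mu (cyl Gam j (h3mul g @` A)) = mu (cyl Gam j A)) :
  [set hc t | t in [set: R]] `&` \bigcap_n Gam n = [set h3one] -> odo_free mu.
Proof.
move=> hZ.
have hsub n : is_subgroup (Gam n) by case: (hlat n).
have hZ' : forall t, (forall n, Gam n (hc t)) -> t = 0.
  move=> t Ht.
  have : ([set hc t | t in [set: R]] `&` \bigcap_n Gam n) (hc t).
    by split; [exists t | move=> n _; exact: Ht].
  by rewrite hZ /hc /h3one => -[].
have hdisc : is_discrete (Gam 0%N) by case: (hlat 0%N).
have [code hcode] := @exists_code R _ hdisc.
have hsepall := @sep R Gam hsub hnest hdisc hZ'.
pose Aset n (M : nat) k := [set h | exists gam, [/\ Gam 0%N gam, code gam = n,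
   (gam.1.1, gam.1.2) != (0, 0) & Av (Gam k) gam.1.1 gam.1.2 M%:R 0 h]].
pose Bset n M := \bigcap_k cyl Gam k (Aset n M k).
have Bneg : forall n M, mu.-negligible (Bset n M).
  move=> n M.
  have [[g0 [G0 c0 nz]]|ne] := pselect (exists g0, [/\ Gam 0%N g0, code g0 = n &
      (g0.1.1, g0.1.2) != (0, 0)]); last first.
    apply: (negligibleS _ (negligible_set0 mu)) => x /(_ 0%N I) [_ [h [[gam [? ? ? _]] _]]].
    by apply: ne; exists gam.
  have eA : forall k, Aset n M k = Av (Gam k) g0.1.1 g0.1.2 M%:R 0.
    move=> k; apply/seteqP; split => h.
    - case=> gam [G c nz' A].
      by have e := hcode _ _ G0 G (etrans c0 (esym c)); rewrite e.
    - by move=> A; exists g0; split.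
  have -> : Bset n M = \bigcap_k cyl Gam k (Av (Gam k) g0.1.1 g0.1.2 M%:R 0).
    by apply/seteqP; split => x Hx k _; have := Hx k I; rewrite eA.
  have hAm : forall k r, measurable (Av (Gam k) g0.1.1 g0.1.2 M%:R r).
    move=> k r; apply: (@Av_meas R (Gam 0%N) (Gam k) code hcode) => x.
    exact: (nest_mono hnest _ _ (leq0n k)).
  apply/negligibleP.
    by apply: bigcapT_measurable => k; apply: cyl_meas.
  exact: Bnull.
rewrite /odo_free.
apply: (@negligibleS _ _ _ mu (\bigcup_n \bigcup_M Bset n M)); last first.
  by apply: negligible_bigcup => n; apply: negligible_bigcup => M; exact: Bneg.
move=> x /= nP.
have ox : odo_set Gam x by apply: contrapT => H; apply: nP => /H.
have [g [ag ng]] : exists g, odo_act g x = x /\ g <> h3one.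
  apply: contrapT => H; apply: nP => _ g ag; apply: contrapT => ng.
  by apply: H; exists g; split.
have hj : forall j, exists h, x j = coset h (Gam j) /\
    Gam j ((g.1.1, g.1.2), g.2 + g.1.1 * h.1.2 - g.1.2 * h.1.1).
  move=> j; case: (ox) => /(_ j) [h e] _; exists h; split => //.
  apply: L1 (hsub j) _.
  by have := congr1 (fun y => y j) ag; rewrite /odo_act e.
have [vz|vnz] := eqVneq (g.1.1, g.1.2) (0, 0).
  exfalso; apply: ng; case: vz => e1 e2.
  have e3 : g.2 = 0.
    apply: hZ' => n; have [h [_ Gh]] := hj n.
    by move: Gh; rewrite e1 e2 !mul0r subr0 addr0.
  by move: e1 e2 e3; case: (g) => [[a b] c] /= -> -> ->.
have [h0 [e0 G0]] := hj 0%N.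
have [M hM] : exists M : nat, `|g.2| <= M%:R.
  by exists (Num.bound `|g.2|); apply: ltW; apply: archi_boundP.
exists (code ((g.1.1, g.1.2), g.2 + g.1.1 * h0.1.2 - g.1.2 * h0.1.1)) => //.
exists M => //.
move=> k _; have [h [ek Gk]] := hj k; split => //; exists h; split => //.
exists ((g.1.1, g.1.2), g.2 + g.1.1 * h0.1.2 - g.1.2 * h0.1.1); split => //=.
exists g.2; split => //.
by rewrite subr0 /phi addrA.
Qed.


Theorem theorem3p1 (R : realType) (Gam : nat -> set (H3 R))
  (hlat : forall n, lattice (Gam n))
  (hnest : forall n, Gam n.+1 `<=` Gam n)
  (mu : probability (odo_space Gam) R)
  (hX : mu (odo_set Gam) = 1%E)
  (hinv : forall (j : nat) (g : H3 R) (A : set (H3 R)), measurable A ->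
     mu (cyl Gam j (h3mul g @` A)) = mu (cyl Gam j A)) :
  odo_free mu <->
  [set hc t | t in [set: R]] `&` \bigcap_n Gam n = [set h3one].
Proof.
split; [exact: (@forward R Gam hlat mu hX) | exact: (@backward R Gam hlat hnest mu hinv)].
Qed.
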